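(* Let $0<b\leq a$ and let $\mathcal E(a,b)=\{x=(x_1,x_2)\in\mathbb R^2 : (x_1/a)^2+(x_2/b)^2=1\}$. For $q=(q_1,q_2)\in\mathbb R^2$ define $$\mathbf d^2(q):=\min\{|x-q|^2 : x\in\mathcal E(a,b)\}$$ and the quartic polynomial in $\lambda$ $$P(\lambda):=\big((\lambda-a^2)(\lambda-b^2)\big)^2-a^2q_1^2(\lambda-b^2)^2-b^2q_2^2(\lambda-a^2)^2 .$$ Let $\lambda^*(q)$ denote the smallest real root of $P$. Then $$\mathbf d^2(q)=\begin{cases} \left(\dfrac{\lambda^*(q)}{a^2-\lambda^*(q)}\,q_1\right)^2+\left(\dfrac{\lambda^*(q)}{b^2-\lambda^*(q)}\,q_2\right)^2 & \text{if } q_2\neq 0 \text{ or } a^2-a|q_1|<b^2,\\[2mm] b^2 & \text{if } q_1=q_2=0,\\[2mm] b^2-\dfrac{b^2}{a^2-b^2}\,q_1^2 & \text{if } q_2=0,\ q_1\neq 0 \text{ and } a^2-a|q_1|\geq b^2. \end{cases}$$ Moreover, $\lambda^*(q)=a^2-a|q|$ if $a=b$; if $b<a$ and $q_2\neq0$, $\lambda^*(q)$ is the unique root of $P$ in $(-\infty,b^2)$; and if $b<a$ and $q_2=0$, $\lambda^*(q)=\min\{a^2-a|q_1|,\,b^2\}$.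
   Context: $|\cdot|$ denotes the Euclidean norm on $\mathbb R^2$. $\mathbf d^2(q)$ is the squared Euclidean distance from $q$ to the ellipse curve $\mathcal E(a,b)$ (centered at the origin with semi-axes $a$ along the $x_1$-axis and $b$ along the $x_2$-axis). *)

(* Defs.v *)
From Stdlib Require Import Reals Lra.
Open Scope R_scope.

Definition on_ellipse (a b : R) (x : R * R) : Prop :=
  (fst x / a) ^ 2 + (snd x / b) ^ 2 = 1.

Definition sqdist (x q : R * R) : R :=
  (fst x - fst q) ^ 2 + (snd x - snd q) ^ 2.

Definition norm2 (q : R * R) : R := sqrt (fst q ^ 2 + snd q ^ 2).

Definition is_d2 (a b : R) (q : R * R) (d2 : R) : Prop :=
  (exists x, on_ellipse a b x /\ sqdist x q = d2) /\
  (forall x, on_ellipse a b x -> d2 <= sqdist x q).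

Definition Pq (a b : R) (q : R * R) (l : R) : R :=
  ((l - a ^ 2) * (l - b ^ 2)) ^ 2
  - a ^ 2 * (fst q) ^ 2 * (l - b ^ 2) ^ 2
  - b ^ 2 * (snd q) ^ 2 * (l - a ^ 2) ^ 2.

Definition smallest_root (a b : R) (q : R * R) (l : R) : Prop :=
  Pq a b q l = 0 /\ forall m, Pq a b q m = 0 -> l <= m.

(* Main.v *)
Require Import Defs.
From Stdlib Require Import Reals Lra Psatz.
Open Scope R_scope.

Lemma L_min (a b l : R) (q xs : R * R) : 0 < a -> 0 < b ->
  (1 - l / a^2) * fst xs = fst q -> (1 - l / b^2) * snd xs = snd q ->
  0 <= 1 - l / a^2 -> 0 <= 1 - l / b^2 -> on_ellipse a b xs ->
  forall x, on_ellipse a b x -> sqdist xs q <= sqdist x q.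
Proof.
  intros ha hb h1 h2 p1 p2 exs x ex.
  set (al := 1 - l / a^2) in *. set (be := 1 - l / b^2) in *.
  assert (Hid : forall y, sqdist y q = al*(fst y)^2 + be*(snd y)^2
     - 2*fst q*fst y - 2*snd q*snd y + (fst q)^2 + (snd q)^2
     + l*((fst y/a)^2+(snd y/b)^2)).
  { intros y. unfold sqdist, al, be. field. lra. }
  unfold on_ellipse in *.
  rewrite (Hid x), (Hid xs), ex, exs, <- h1, <- h2.
  assert (0 <= al * (fst x - fst xs)^2) by (apply Rmult_le_pos; [lra| apply pow2_ge_0]).
  assert (0 <= be * (snd x - snd xs)^2) by (apply Rmult_le_pos; [lra| apply pow2_ge_0]).
  nra.
Qed.

Lemma L_case1 (a b l : R) (q : R * R) : 0 < b -> b <= a -> l < b^2 ->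
  Pq a b q l = 0 ->
  is_d2 a b q ((l / (a ^ 2 - l) * fst q) ^ 2 + (l / (b ^ 2 - l) * snd q) ^ 2).
Proof.
  intros hb hba hl hP.
  assert (ha : 0 < a) by lra.
  assert (b^2 <= a^2) by nra.
  assert (hA : 0 < a^2 - l) by lra. assert (hB : 0 < b^2 - l) by lra.
  set (xs := (a^2 * fst q / (a^2 - l), b^2 * snd q / (b^2 - l))).
  assert (exs : on_ellipse a b xs).
  { unfold on_ellipse, xs; simpl. unfold Pq in hP.
    assert (E : (a ^ 2 - l)^2 * (b ^ 2 - l)^2 = a^2 * fst q ^2 * (b^2-l)^2 + b^2 * snd q^2 * (a^2-l)^2) by nra.
    apply (Rmult_eq_reg_r ((a ^ 2 - l)^2 * (b ^ 2 - l)^2)).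
    2: { apply Rgt_not_eq. apply Rmult_lt_0_compat; apply pow_lt; lra. }
    rewrite Rmult_1_l.
    transitivity (a^2*fst q^2*(b^2-l)^2 + b^2*snd q^2*(a^2-l)^2).
    field. lra. rewrite E; ring. }
  assert (Hd : sqdist xs q = (l / (a ^ 2 - l) * fst q) ^ 2 + (l / (b ^ 2 - l) * snd q) ^ 2).
  { unfold sqdist, xs; simpl. field. lra. }
  rewrite <- Hd.
  split.
  - exists xs. split; [exact exs| reflexivity].
  - apply (L_min a b l); auto.
    + unfold xs; simpl. field. lra.
    + unfold xs; simpl. field. lra.
    + assert (l / a^2 < 1). { apply (Rmult_lt_reg_r (a^2)). nra. field_simplify; nra. } lra.
    + assert (l / b^2 < 1). { apply (Rmult_lt_reg_r (b^2)). nra. field_simplify; nra. } lra.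
Qed.

Lemma L_case3 (a b : R) (q : R * R) : 0 < b -> b < a -> snd q = 0 ->
  a * Rabs (fst q) <= a^2 - b^2 ->
  is_d2 a b q (b ^ 2 - b ^ 2 / (a ^ 2 - b ^ 2) * (fst q) ^ 2).
Proof.
  intros hb hba h2 h1.
  assert (ha : 0 < a) by lra.
  assert (hD : 0 < a^2 - b^2) by nra.
  assert (h0 : 0 <= a * Rabs (fst q)) by (apply Rmult_le_pos; [lra | apply Rabs_pos]).
  assert (hsq : a^2 * fst q ^2 <= (a^2-b^2)^2).
  { rewrite <- (pow2_abs (fst q)). assert ((a * Rabs (fst q))^2 <= (a^2-b^2)^2).
    { apply pow_incr. lra. }
    replace (a^2 * Rabs (fst q)^2) with ((a * Rabs (fst q))^2) by ring. exact H. }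
  set (t := b^2 * (1 - a^2 * fst q^2 / (a^2-b^2)^2)).
  assert (ht : 0 <= t).
  { unfold t. apply Rmult_le_pos. nra.
    assert (a^2 * fst q^2 / (a^2-b^2)^2 <= 1).
    { apply (Rmult_le_reg_r ((a^2-b^2)^2)). nra. field_simplify; nra. } lra. }
  set (xs := (a^2 * fst q / (a^2 - b^2), sqrt t)).
  assert (exs : on_ellipse a b xs).
  { unfold on_ellipse, xs; cbn [fst snd].
    replace ((sqrt t / b)^2) with (sqrt t ^2 / b^2) by (field; lra).
    rewrite pow2_sqrt by exact ht. unfold t. field. lra. }
  assert (Hd : sqdist xs q = b ^ 2 - b ^ 2 / (a ^ 2 - b ^ 2) * (fst q) ^ 2).
  { unfold sqdist, xs; cbn [fst snd].
    replace ((sqrt t - snd q)^2) with (sqrt t ^2) by (rewrite h2; ring).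
    rewrite pow2_sqrt by exact ht. unfold t. field. lra. }
  rewrite <- Hd.
  split.
  - exists xs. split; [exact exs| reflexivity].
  - apply (L_min a b (b^2)); auto.
    + unfold xs; simpl. field. lra.
    + unfold xs; simpl. rewrite h2. field. lra.
    + assert (b^2 / a^2 < 1). { apply (Rmult_lt_reg_r (a^2)). nra. field_simplify; nra. } lra.
    + replace (b^2/b^2) with 1 by (field; lra). lra.
Qed.

Lemma L_case2 (a b : R) (q : R * R) : 0 < b -> b <= a -> fst q = 0 -> snd q = 0 ->
  is_d2 a b q (b ^ 2).
Proof.
  intros hb hba h1 h2.
  assert (ha : 0 < a) by lra.
  assert (exs : on_ellipse a b (0, b)).
  { unfold on_ellipse; simpl. field. lra. }
  assert (Hd : sqdist (0,b) q = b^2).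
  { unfold sqdist; cbn [fst snd]. rewrite h1, h2. ring. }
  rewrite <- Hd.
  split.
  - exists (0,b). split; [exact exs| reflexivity].
  - apply (L_min a b (b^2)); auto.
    + simpl. rewrite h1. ring.
    + simpl. rewrite h2. field. lra.
    + assert (b^2 / a^2 <= 1). { apply (Rmult_le_reg_r (a^2)). nra. field_simplify; nra. } lra.
    + replace (b^2/b^2) with 1 by (field; lra). lra.
Qed.

Lemma R_eq (a : R) (q : R * R) : 0 < a -> smallest_root a a q (a^2 - a * norm2 q).
Proof.
  intros ha. set (s := norm2 q).
  assert (hs0 : 0 <= s) by apply sqrt_pos.
  assert (hs2 : s^2 = fst q^2 + snd q^2) by (apply pow2_sqrt; nra).
  assert (HP : forall m, Pq a a q m = (m - a^2)^2 * ((m-a^2)^2 - a^2 * s^2)).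
  { intros m. unfold Pq. rewrite hs2. ring. }
  split.
  - rewrite HP. ring.
  - intros m hm. rewrite HP in hm.
    destruct (Rle_or_lt (a^2 - a*s) m) as [h|h]; auto.
    exfalso.
    assert (h0 : 0 <= a * s) by nra.
    assert (h1 : a * s < a^2 - m) by lra.
    assert (h2 : 0 < (m - a^2)^2) by nra.
    assert (h3 : (a*s)^2 < (a^2 - m)^2) by nra.
    assert (h4 : 0 < (m-a^2)^2 - a^2 * s^2) by nra.
    assert (0 < (m - a^2)^2 * ((m-a^2)^2 - a^2 * s^2)) by (apply Rmult_lt_0_compat; auto).
    lra.
Qed.

Lemma R_q20 (a b : R) (q : R * R) : 0 < b -> b < a -> snd q = 0 ->
  smallest_root a b q (Rmin (a^2 - a * Rabs (fst q)) (b^2)).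
Proof.
  intros hb hba h2.
  assert (hP : forall m, Pq a b q m = (m - b^2)^2 * ((m-a^2)^2 - (a * Rabs (fst q))^2)).
  { intros m. unfold Pq. rewrite h2. rewrite (Rpow_mult_distr a (Rabs (fst q))), pow2_abs. ring. }
  assert (h0 : 0 <= a * Rabs (fst q)) by (apply Rmult_le_pos; [lra | apply Rabs_pos]).
  split.
  - rewrite hP. unfold Rmin. destruct (Rle_dec _ _); ring.
  - intros m hm. rewrite hP in hm.
    destruct (Rle_or_lt (Rmin (a^2 - a * Rabs (fst q)) (b^2)) m) as [h|h]; auto.
    exfalso.
    assert (hm1 : m < a^2 - a * Rabs (fst q)) by (eapply Rlt_le_trans; [exact h| apply Rmin_l]).
    assert (hm2 : m < b^2) by (eapply Rlt_le_trans; [exact h| apply Rmin_r]).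
    assert (h2' : 0 < (m - b^2)^2) by nra.
    assert (h3 : (a * Rabs (fst q))^2 < (a^2 - m)^2) by nra.
    assert (h4 : 0 < (m-a^2)^2 - (a * Rabs (fst q))^2) by nra.
    assert (0 < (m - b^2)^2 * ((m-a^2)^2 - (a * Rabs (fst q))^2)) by (apply Rmult_lt_0_compat; auto).
    lra.
Qed.

Lemma Mono (a b : R) (q : R * R) (m1 m2 : R) : 0 < b -> b <= a -> snd q <> 0 ->
  m1 < m2 -> m2 < b^2 -> Pq a b q m2 = 0 -> 0 < Pq a b q m1.
Proof.
  intros hb hba h2 h12 hm2 hP.
  assert (b^2 <= a^2) by nra.
  unfold Pq in *.
  set (A1 := a^2 - m1). set (A2 := a^2 - m2). set (B1 := b^2 - m1). set (B2 := b^2 - m2).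
  set (u := a^2 * fst q^2). set (v := b^2 * snd q^2).
  assert (hu : 0 <= u) by (unfold u; nra).
  
  assert (hq : 0 < snd q ^ 2) by (destruct (Rdichotomy _ _ h2); nra).
  assert (hv : 0 < v) by (unfold v; apply Rmult_lt_0_compat; nra).
  assert (E : A2^2 * B2^2 = u * B2^2 + v * A2^2).
  { unfold A2, B2, u, v. nra. }
  assert (hA : A2^2 <= A1^2) by (apply pow_incr; unfold A1, A2; lra).
  assert (hB : B2^2 < B1^2).
  { assert (0 < B2) by (unfold B2; lra). assert (B2 < B1) by (unfold B1, B2; lra). nra. }
  assert (hA2 : 0 < A2^2) by (apply pow_lt; unfold A2; lra).
  assert (hB2 : 0 < B2^2) by (apply pow_lt; unfold B2; lra).
  assert (K : (u * B1^2 + v * A1^2) * (A2^2 * B2^2) < (A1^2 * B1^2) * (A2^2 * B2^2)).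
  { rewrite E at 2.
    assert (u * B1^2 * A2^2 * B2^2 <= u * B1^2 * A1^2 * B2^2).
    { apply Rmult_le_compat_r; [lra|]. apply Rmult_le_compat_l; [nra|]. lra. }
    assert (v * A1^2 * A2^2 * B2^2 < v * A1^2 * A2^2 * B1^2).
    { apply Rmult_lt_compat_l; [|lra]. apply Rmult_lt_0_compat; [|lra]. apply Rmult_lt_0_compat; lra. }
    nra. }
  assert (K2 : u * B1^2 + v * A1^2 < A1^2 * B1^2).
  { apply (Rmult_lt_reg_r (A2^2 * B2^2)); [nra | exact K]. }
  replace (((m1 - a ^ 2) * (m1 - b ^ 2)) ^ 2 - u * (m1 - b ^ 2) ^ 2 -
    v * (m1 - a ^ 2) ^ 2) with (A1^2 * B1^2 - (u * B1^2 + v * A1^2))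
    by (unfold A1, B1, u, v; ring).
  lra.
Qed.

Lemma R_q2ne (a b : R) (q : R * R) : 0 < b -> b < a -> snd q <> 0 ->
  exists l, smallest_root a b q l /\ l < b^2 /\
    forall m, m < b^2 -> Pq a b q m = 0 -> m = l.
Proof.
  intros hb hba h2.
  assert (hq : 0 < snd q ^ 2) by (destruct (Rdichotomy _ _ h2); nra).
  set (u := a^2 * fst q^2). set (v := b^2 * snd q^2).
  assert (hu : 0 <= u) by (unfold u; nra).
  assert (hv : 0 < v) by (unfold v; apply Rmult_lt_0_compat; nra).
  set (K := u + v + 1).
  set (M := b^2 - K).
  assert (hPM : 0 < Pq a b q M).
  { unfold Pq. fold u v.
    set (A := a^2 - M). set (B := b^2 - M).
    assert (hB : B = K) by (unfold B, M; ring).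
    assert (hAB : K <= A) by (unfold A, M; nra).
    assert (hK2 : u + v < K^2) by (unfold K; nra).
    replace (((M - a ^ 2) * (M - b ^ 2)) ^ 2 - u * (M - b ^ 2) ^ 2 - v * (M - a ^ 2) ^ 2)
      with (A^2 * B^2 - u * B^2 - v * A^2) by (unfold A, B; ring).
    rewrite hB.
    assert (hK0 : 0 < K) by (unfold K; lra).
    assert (hKA : K^2 <= A^2) by (apply pow_incr; lra).
    assert (u * K^2 <= u * A^2) by (apply Rmult_le_compat_l; lra).
    assert (0 < A^2) by (apply pow_lt; lra).
    assert (0 < A^2 * (K^2 - u - v)) by (apply Rmult_lt_0_compat; lra).
    nra. }
  assert (hPb : Pq a b q (b^2) < 0).
  { unfold Pq. fold u v.
    replace (((b^2 - a ^ 2) * (b^2 - b ^ 2)) ^ 2 - u * (b^2 - b ^ 2) ^ 2 - v * (b^2 - a ^ 2) ^ 2)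
      with (- (v * (b^2-a^2)^2)) by ring.
    assert (b^2 < a^2) by nra.
    assert (0 < (b^2-a^2)^2) by (replace ((b^2-a^2)^2) with ((a^2-b^2)^2) by ring; apply pow_lt; lra).
    assert (0 < v * (b^2-a^2)^2) by (apply Rmult_lt_0_compat; nra).
    lra. }
  assert (hc : continuity (fun l => - Pq a b q l)) by (unfold Pq; reg).
  assert (hMb : M < b^2) by (unfold M, K; lra).
  destruct (IVT (fun l => - Pq a b q l) M (b^2) hc hMb ltac:(lra) ltac:(lra)) as [z [hz hPz]].
  assert (hPz' : Pq a b q z = 0) by lra.
  assert (hzb : z < b^2).
  { destruct hz as [_ hz]. destruct (Rle_lt_or_eq_dec _ _ hz) as [h|h]; auto.
    rewrite h in hPz'. lra. }
  assert (hba' : b <= a) by lra.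
  exists z. split; [split|split]; auto.
  - intros m hm. destruct (Rle_or_lt z m) as [h|h]; auto.
    pose proof (Mono a b q m z hb hba' h2 h hzb hPz'). lra.
  - intros m hm hPm. destruct (Rtotal_order m z) as [h|[h|h]]; auto.
    + pose proof (Mono a b q m z hb hba' h2 h hzb hPz'). lra.
    + pose proof (Mono a b q z m hb hba' h2 h hm hPm). lra.
Qed.

Lemma sr_unique a b q l1 l2 : smallest_root a b q l1 -> smallest_root a b q l2 -> l1 = l2.
Proof. intros [h1 m1] [h2 m2]. apply Rle_antisym; auto. Qed.

Theorem mainTheorem1 (a b : R) (q : R * R) (hb : 0 < b) (hba : b <= a) :
  (exists l, smallest_root a b q l) /\
  (forall l, smallest_root a b q l ->
     ((snd q <> 0 \/ a ^ 2 - a * Rabs (fst q) < b ^ 2) ->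
        is_d2 a b q ((l / (a ^ 2 - l) * fst q) ^ 2 + (l / (b ^ 2 - l) * snd q) ^ 2)) /\
     ((fst q = 0 /\ snd q = 0) -> is_d2 a b q (b ^ 2)) /\
     ((snd q = 0 /\ fst q <> 0 /\ b ^ 2 <= a ^ 2 - a * Rabs (fst q)) ->
        is_d2 a b q (b ^ 2 - b ^ 2 / (a ^ 2 - b ^ 2) * (fst q) ^ 2)) /\
     (a = b -> l = a ^ 2 - a * norm2 q) /\
     ((b < a /\ snd q <> 0) ->
        l < b ^ 2 /\ forall m, m < b ^ 2 -> Pq a b q m = 0 -> m = l) /\
     ((b < a /\ snd q = 0) -> l = Rmin (a ^ 2 - a * Rabs (fst q)) (b ^ 2))).
Proof.
  assert (ha : 0 < a) by lra.
  assert (C2 : (fst q = 0 /\ snd q = 0) -> is_d2 a b q (b ^ 2)).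
  { intros [h1 h2]. apply L_case2; auto. }
  assert (C3 : (snd q = 0 /\ fst q <> 0 /\ b ^ 2 <= a ^ 2 - a * Rabs (fst q)) ->
        is_d2 a b q (b ^ 2 - b ^ 2 / (a ^ 2 - b ^ 2) * (fst q) ^ 2)).
  { intros [h2 [h1 h]]. assert (0 < Rabs (fst q)) by (apply Rabs_pos_lt; auto).
    assert (0 < a * Rabs (fst q)) by (apply Rmult_lt_0_compat; auto).
    apply L_case3; auto; [|lra]. nra. }
  destruct (Rle_lt_or_eq_dec _ _ hba) as [hlt|heq].
  - destruct (Req_dec (snd q) 0) as [h2|h2].
    + pose proof (R_q20 a b q hb hlt h2) as hr.
      split; [eexists; exact hr|].
      intros l hl. rewrite (sr_unique _ _ _ _ _ hl hr).
      split; [|split; [exact C2|split; [exact C3|split; [|split]]]].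
      * intros [h|h]; [tauto|]. apply L_case1; auto.
        -- eapply Rle_lt_trans; [apply Rmin_l| exact h].
        -- apply hr.
      * intros; lra.
      * intros; tauto.
      * intros; reflexivity.
    + destruct (R_q2ne a b q hb hlt h2) as [z [hz [hzb hu]]].
      split; [eexists; exact hz|].
      intros l hl. rewrite (sr_unique _ _ _ _ _ hl hz).
      split; [|split; [exact C2|split; [exact C3|split; [|split]]]].
      * intros _. apply L_case1; auto. apply hz.
      * intros; lra.
      * intros; split; auto.
      * intros; tauto.
  - subst b. pose proof (R_eq a q ha) as hr.
    split; [eexists; exact hr|].
    intros l hl. rewrite (sr_unique _ _ _ _ _ hl hr).
    split; [|split; [exact C2|split; [exact C3|split; [|split]]]].
    2: { intros; reflexivity. }
    2: { intros; lra. }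
    2: { intros; lra. }
    intros hc. apply L_case1; auto; [|apply hr].
    assert (hs0 : 0 <= norm2 q) by apply sqrt_pos.
    assert (hs2 : norm2 q^2 = fst q^2 + snd q^2) by (apply pow2_sqrt; nra).
    assert (0 < norm2 q).
    { destruct hc as [h|h].
      - assert (0 < snd q ^ 2) by (destruct (Rdichotomy _ _ h); nra).
        destruct (Rle_lt_or_eq_dec _ _ hs0) as [|e]; auto. rewrite <- e in hs2. nra.
      - assert (0 < a * Rabs (fst q)) by lra.
        assert (0 < Rabs (fst q)) by nra.
        assert (hq1 : fst q <> 0) by (intro e; rewrite e, Rabs_R0 in *; lra).
        assert (0 < fst q ^ 2) by (destruct (Rdichotomy _ _ hq1); nra).
        destruct (Rle_lt_or_eq_dec _ _ hs0) as [|e]; auto. rewrite <- e in hs2. nra. }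
    nra.
Qed.
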